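(* Let $E:\mathbb{R}^M\to\mathbb{R}$ be the discretized Lifshitz–Petrich energy described in the context. Let $\bar U\in\mathbb{R}^M$ and $U\in\mathbb{R}^M$ be states lying in the generalized quadratic region of a generalized local minimum of $E$ (so $H(U)$ and $H(\bar U)$ have no negative eigenvalues), and suppose $\dim\mathcal{W}^k(U)\le\dim\mathcal{W}^k(\bar U)$ and $\|\sin\Theta(\mathcal{W}^k(U),\mathcal{W}^k(\bar U))\|_2<1$. Then every solution $\bm v$ of the optimization problem $$\min_{\bm v\in\mathbb{R}^M}\langle\bm v,H(U)\bm v\rangle\quad\text{s.t.}\quad\langle\bm v,\bm v\rangle=1,\ \ \bm v\perp\mathcal{W}^k(\bar U)$$ has an ascent component, i.e. its orthogonal projection onto $\mathcal{W}^s(U)$ is nonzero.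
   Context: Setting: fix an invertible lattice matrix $\bm A\in\mathbb{R}^{n\times n}$ and $\bm B$ with $\bm A\bm B^T=2\pi I$; grid $\Omega_N=\{\bm A(j_1/N,\dots,j_n/N)^T:0\le j_i\le N-1\}$ with $M=N^n$ points; $U\in\mathbb{R}^M$ is a grid function; $\langle f,g\rangle=\frac1M\sum_s f(\bm r_s)\overline{g(\bm r_s)}$. $\mathcal{F}_M$ is the discrete Fourier transform over $\mathbb{K}_N^n=\{\bm k\in\mathbb{Z}^n:-N/2\le k_j<N/2\}$, $D$ is diagonal with entries $[q_1^2-|\bm B\bm k|^2]^2[q_2^2-|\bm B\bm k|^2]^2$, $\varepsilon,\alpha\in\mathbb{R}$. Energy $E(U)=\tfrac12\langle U,\mathcal{F}_M^{-1}D\mathcal{F}_MU\rangle+\frac1M\sum_s(-\tfrac\varepsilon2u_s^2-\tfrac\alpha3u_s^3+\tfrac14u_s^4)$, gradient $\nabla E(U)=\mathcal{F}_M^{-1}D\mathcal{F}_MU+\operatorname{diag}(-\varepsilon-\alpha U+U^2)U$, Hessian $H(U)=\mathcal{F}_M^{-1}D\mathcal{F}_M+\operatorname{diag}(-\varepsilon-2\alpha U+3U^2)$ (a real symmetric matrix). A generalized local minimum (GLM) is a critical point ($\nabla E=0$) whose Hessian has no negative eigenvalues. The generalized quadratic region (GQR) of a generalized critical point $U^*$ is a region around $U^*$ on which $H(U)$ has the same number of negative eigenvalues as $H(U^* )$. $\mathcal{W}^k(U)$, $\mathcal{W}^s(U)$ are the spans of eigenvectors of $H(U)$ with zero, resp.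 positive, eigenvalues. Principal angles: for subspaces $\mathcal{W},\widehat{\mathcal{W}}\subset\mathbb{R}^M$ with $\dim\mathcal{W}=d\le\dim\widehat{\mathcal{W}}$, the angles $0\le\theta_1\le\dots\le\theta_d\le\pi/2$ are defined recursively by $\cos\theta_i=\max\{\bm u^T\bm v/(\|\bm u\|_2\|\bm v\|_2):\bm u\in\mathcal{W},\bm u\perp\bm u_1,\dots,\bm u_{i-1},\ \bm v\in\widehat{\mathcal{W}},\bm v\perp\bm v_1,\dots,\bm v_{i-1}\}$, attained at $(\bm u_i,\bm v_i)$; $\sin\Theta(\mathcal{W},\widehat{\mathcal{W}})=\operatorname{diag}(\sin\theta_1,\dots,\sin\theta_d)$, so $\|\sin\Theta(\mathcal{W},\widehat{\mathcal{W}})\|_2=\sin\theta_d$. *)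

(* Defs.v *)
From HB Require Import structures.
From mathcomp Require Import all_boot all_order all_algebra.
From mathcomp Require Import all_classical all_reals all_analysis.
Set Implicit Arguments. Unset Strict Implicit. Unset Printing Implicit Defensive.
Import Order.TTheory GRing.Theory Num.Theory.
Local Open Scope ring_scope.

Section LP.
Variables (R : realType) (n N : nat).

(* M = N^n grid points; the grid index s < N^n encodes the multi-index
   j(s) = (j_0,...,j_{n-1}) by its base-N digits. *)
Definition Mdim : nat := (N ^ n)%N.

Definition jidx (s : nat) (i : 'I_n) : nat := (s %/ N ^ i) %% N.

Definition gridpt (A : 'M[R]_n) (s : nat) : 'cV[R]_n :=
  A *m \col_i ((jidx s i)%:R / N%:R).

(* frequency set K_N^n = {k in Z^n : -N/2 <= k_j < N/2}, parametrized by
   m : {ffun 'I_n -> 'I_N} via k_j = m_j - floor(N/2). *)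
Definition kvec (m : {ffun 'I_n -> 'I_N}) : 'cV[R]_n :=
  \col_i ((m i)%:R - (N./2)%:R).

Definition dotc (x y : 'cV[R]_n) : R := \sum_i x i 0 * y i 0.

Definition Dsym (q1 q2 : R) (B : 'M[R]_n) (m : {ffun 'I_n -> 'I_N}) : R :=
  let b := dotc (B *m kvec m) (B *m kvec m) in
  (q1 ^+ 2 - b) ^+ 2 * (q2 ^+ 2 - b) ^+ 2.

(* The matrix F_M^{-1} D F_M: its (s,t) entry is
   (1/M) sum_{k in K} D_k exp(i Bk.(r_s - r_t)); we take its real part. *)
Definition Lmx (A B : 'M[R]_n) (q1 q2 : R) : 'M[R]_Mdim :=
  \matrix_(s, t) ((Mdim%:R)^-1 *
     \sum_(m : {ffun 'I_n -> 'I_N})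
        Dsym q1 q2 B m * cos (dotc (B *m kvec m) (gridpt A s - gridpt A t))).

Definition gradE (A B : 'M[R]_n) (q1 q2 eps alpha : R) (U : 'rV[R]_Mdim)
  : 'rV[R]_Mdim :=
  U *m Lmx A B q1 q2 +
  \row_s ((- eps - alpha * U 0 s + U 0 s ^+ 2) * U 0 s).

Definition HessE (A B : 'M[R]_n) (q1 q2 eps alpha : R) (U : 'rV[R]_Mdim)
  : 'M[R]_Mdim :=
  Lmx A B q1 q2 +
  diag_mx (\row_s (- eps - 2 * alpha * U 0 s + 3 * U 0 s ^+ 2)).

Definition ip (f g : 'rV[R]_Mdim) : R := (Mdim%:R)^-1 * \sum_s f 0 s * g 0 s.

End LP.

Section LinAlg.
Variables (R : realType) (M : nat).

Definition no_neg_eig (H : 'M[R]_M) : Prop :=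
  forall a : R, eigenvalue H a -> 0 <= a.

Definition Wk (H : 'M[R]_M) : 'M[R]_M := eigenspace H 0.

Definition in_Ws (H : 'M[R]_M) (w : 'rV[R]_M) : Prop :=
  exists (k : nat) (a : 'I_k -> R) (e : 'I_k -> 'rV[R]_M),
    (forall i, 0 < a i /\ e i *m H = a i *: e i) /\ w = \sum_i e i.

Definition dotr (x y : 'rV[R]_M) : R := \sum_s x 0 s * y 0 s.
Definition norm2 (x : 'rV[R]_M) : R := Num.sqrt (dotr x x).
Definition cosr (x y : 'rV[R]_M) : R := dotr x y / (norm2 x * norm2 y).

Definition is_proj_Ws (H : 'M[R]_M) (v p : 'rV[R]_M) : Prop :=
  in_Ws H p /\ forall w, in_Ws H w -> dotr (v - p) w = 0.

(* (u i, v i, c i)_{i < dim W} realize the recursive definition of the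
   principal angles between W and Wh: c i = cos theta_{i+1}. *)
Definition principal_data (W Wh : 'M[R]_M)
  (u v : nat -> 'rV[R]_M) (c : nat -> R) : Prop :=
  forall i, (i < \rank W)%N ->
    [/\ (u i <= W)%MS /\ (v i <= Wh)%MS, u i != 0 /\ v i != 0,
        (forall j, (j < i)%N -> dotr (u i) (u j) = 0 /\ dotr (v i) (v j) = 0),
        c i = cosr (u i) (v i) &
        (forall x y, (x <= W)%MS -> (y <= Wh)%MS -> x != 0 -> y != 0 ->
           (forall j, (j < i)%N -> dotr x (u j) = 0 /\ dotr y (v j) = 0) ->
           cosr x y <= c i)].

(* || sin Theta(W, Wh) ||_2 = sin theta_d, d = dim W (0 if d = 0) *)
Definition sinTheta_norm (W : 'M[R]_M) (c : nat -> R) : R :=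
  if \rank W == 0%N then 0 else sin (acos (c (\rank W).-1)).

End LinAlg.

(* Main.v *)
Require Import Defs.
From HB Require Import structures.
From mathcomp Require Import all_boot all_order all_algebra.
From mathcomp Require Import all_classical all_reals all_analysis.
From mathcomp Require Import complex ring lra.
Import Order.TTheory GRing.Theory Num.Theory.
Set Implicit Arguments. Unset Strict Implicit.
Local Open Scope ring_scope.
Lemma sym_minpoly (R : rcfType) m (H : 'M[R]_m.+1) : H^T = H ->
  exists2 rs, uniq rs & mxminpoly H %| \prod_(x <- rs) ('X - x%:P).
Proof.
move=> Hsym.
pose toC := real_complex R.
pose Hc := map_mx toC H.
have Hh : Hc \is hermsymmx.
  apply: realsym_hermsym.
    rewrite qualifE /Hc expr0 scale1r map_mx_id //; apply/eqP/matrixP => i j; by rewrite !mxE -[in RHS]Hsym mxE.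
  rewrite qualifE/=; apply/'forall_forallP => i j; by rewrite mxE complex_real.
have /orthomx_spectralP Heq := hermitian_normalmx Hh.
have dreal := hermitian_spectral_diag_real Hh.
set P := spectralmx Hc in Heq; set d := spectral_diag Hc in Heq dreal.
pose rs := undup [seq complex.Re (d 0 i) | i : 'I_m.+1].
exists rs; first exact: undup_uniq.
apply: mxminpoly_min.
apply: (@map_mx_inj _ _ toC).
rewrite map_horner_mx -/Hc map_mx0 Heq horner_mx_uconjC ?spectral_unit //.
rewrite horner_mx_diag.
suff -> : map_mx (horner (map_poly toC (\prod_(x <- rs) ('X - x%:P)))) d = 0.
  by rewrite raddf0 mulmx0 mul0mx.
apply/rowP => j; rewrite !mxE rmorph_prod horner_prod.
have dj : d 0 j = toC (complex.Re (d 0 j)).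
  by rewrite /toC RRe_real //; apply: (mxOverP dreal).
have : complex.Re (d 0 j) \in rs.
  by rewrite mem_undup; apply/mapP; exists j => //; rewrite mem_enum.
move=> /perm_to_rem /(perm_big _) ->; rewrite big_cons /=.
rewrite map_polyXsubC hornerXsubC; apply/eqP; rewrite mulf_eq0 subr_eq0; apply/orP; left; apply/eqP; exact: dj.
Qed.
Lemma decomp (R : realType) M (H : 'M[R]_M) : H^T = H -> no_neg_eig H ->
  forall v : 'rV_M, exists p, in_Ws H p /\ (v - p) *m H = 0.
Proof.
case: M H => [|m] H Hs Hn v.
  exists 0; split; last by apply/rowP => -[].
  exists 0%N, (fun _ => 1), (fun _ => 0); split; first by case.
  by rewrite big_ord0.
have [rs0 rs0u Hmin] := @sym_minpoly R m H Hs.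
have /diagonalizablePeigen [rs _ Hsum] := (diagonalizableP H).2 (ex_intro2 _ _ rs0 rs0u Hmin).
have : (v <= \sum_(i < size rs) eigenspace H rs`_i)%MS.
  by rewrite -(big_mkord xpredT (fun i => eigenspace H rs`_i)) -(big_nth 0 xpredT (eigenspace H)) Hsum submx1.
move=> /sub_sumsmxP [u_ vE].
pose w i := u_ i *m eigenspace H rs`_i.
have wE i : w i *m H = rs`_i *: w i by apply/eigenspaceP; exact: submxMl.
pose a (i : 'I_(size rs)) := if 0 < rs`_i then rs`_i else 1.
pose e (i : 'I_(size rs)) := if 0 < rs`_i then w i else 0.
exists (\sum_i e i); split.
  exists (size rs), a, e; split => // i; rewrite /a /e.
  case: ifP => [->|_]; last by rewrite ltr01 mul0mx scaler0.
  by split => //; exact: wE.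
rewrite vE -sumrB mulmx_suml big1 // => i _.
rewrite /e; case: ifP => [_|rpos]; first by rewrite subrr mul0mx.
rewrite subr0 wE.
have [->|rn0] := eqVneq rs`_i 0; first by rewrite scale0r.
have [wi0|wn0] := eqVneq (w i) 0; first by rewrite wi0 scaler0.
exfalso.
have ev : eigenvalue H rs`_i.
  apply/negP => /eqP E0; move/negP: wn0; apply; apply/eqP.
  by apply/eqP; rewrite -submx0 -E0 submxMl.
have := Hn _ ev; rewrite le_eqVlt eq_sym (negPf rn0) /= rpos //.
Qed.
Section Dot.
Variables (R : realType) (M : nat).
Implicit Types x y z : 'rV[R]_M.

Lemma dotrC x y : dotr x y = dotr y x.
Proof. by apply: eq_bigr => i _; rewrite mulrC. Qed.
Lemma dotrDl x y z : dotr (x + y) z = dotr x z + dotr y z.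
Proof. by rewrite /dotr -big_split; apply: eq_bigr => i _; rewrite mxE mulrDl. Qed.
Lemma dotrZl a x y : dotr (a *: x) y = a * dotr x y.
Proof. by rewrite /dotr mulr_sumr; apply: eq_bigr => i _; rewrite mxE mulrA. Qed.
Lemma dotrNl x y : dotr (- x) y = - dotr x y.
Proof. by rewrite -scaleN1r dotrZl mulN1r. Qed.
Lemma dotrDr x y z : dotr z (x + y) = dotr z x + dotr z y.
Proof. by rewrite dotrC dotrDl !(dotrC z). Qed.
Lemma dotrZr a x y : dotr y (a *: x) = a * dotr y x.
Proof. by rewrite dotrC dotrZl dotrC. Qed.
Lemma dotrNr x y : dotr y (- x) = - dotr y x.
Proof. by rewrite dotrC dotrNl dotrC. Qed.
Lemma dotr0l y : dotr 0 y = 0.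
Proof. by rewrite -(scale0r 0) dotrZl mul0r. Qed.
Lemma dotr0r y : dotr y 0 = 0.
Proof. by rewrite dotrC dotr0l. Qed.
Lemma dotr_suml I (r : seq I) (P : pred I) (f : I -> 'rV[R]_M) y :
  dotr (\sum_(i <- r | P i) f i) y = \sum_(i <- r | P i) dotr (f i) y.
Proof.
elim/big_rec2: _ => [|i a b _ <-]; first exact: dotr0l.
by rewrite dotrDl.
Qed.
Lemma dotr_ge0 x : 0 <= dotr x x.
Proof. by apply: sumr_ge0 => i _; rewrite -expr2 sqr_ge0. Qed.
Lemma dotr_eq0 x : (dotr x x == 0) = (x == 0).
Proof.
apply/idP/idP => [/eqP|/eqP->]; last by rewrite dotr0l.
rewrite /dotr => /eqP; rewrite psumr_eq0 => [/allP H|i _]; last by rewrite -expr2 sqr_ge0.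
apply/eqP/rowP => i; rewrite mxE.
by have /(_ (mem_index_enum i))/implyP/(_ isT) := H i; rewrite mulf_eq0 orbb => /eqP.
Qed.
Lemma dotr_gt0 x : x != 0 -> 0 < dotr x x.
Proof. by move=> xn0; rewrite lt0r dotr_eq0 xn0 dotr_ge0. Qed.
Lemma norm2_gt0 x : x != 0 -> 0 < norm2 x.
Proof. by move=> xn0; rewrite /norm2 sqrtr_gt0 dotr_gt0. Qed.
Lemma norm2N x : norm2 (- x) = norm2 x.
Proof. by rewrite /norm2 dotrNl dotrNr opprK. Qed.
Lemma cosrC x y : cosr x y = cosr y x.
Proof. by rewrite /cosr [dotr x y]dotrC [norm2 x * _]mulrC. Qed.
Lemma cosrNr x y : cosr x (- y) = - cosr x y.
Proof. by rewrite /cosr dotrNr norm2N mulNr. Qed.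
Lemma dotr_mx x y : dotr x y = (x *m y^T) 0 0.
Proof. by rewrite mxE; apply: eq_bigr => i _; rewrite mxE. Qed.
End Dot.
Lemma real_key (R : realType) (b be s r t q Q nx : R) :
  0 < b -> 0 < s -> 0 < r -> 0 < nx -> 0 < q -> 0 < Q ->
  q ^+ 2 = s -> Q ^+ 2 = s + t ^+ 2 * r -> t * b * r = be * s ->
  (b + t * be) * (nx * q) <= b * (nx * Q) -> be = 0.
Proof.
move=> bp sp rp nxp qp Qp hq hQ ht hle.
have h1 : (b + t * be) * q <= b * Q.
  by rewrite -(ler_pM2l nxp) mulrCA [nx * (b * Q)]mulrCA.
have h0 : 0 <= t * be.
  have : 0 <= t * be * (b * r).
    have -> : t * be * (b * r) = (t * b * r) * be by ring.
    by rewrite ht mulrAC -expr2 mulr_ge0 ?sqr_ge0 ?ltW.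
  by rewrite pmulr_lge0 // mulr_gt0.
have h2 : ((b + t * be) * q) ^+ 2 <= (b * Q) ^+ 2.
  rewrite ler_sqr // ?nnegrE ?mulr_ge0 ?ltW //; lra.
rewrite !exprMn hq hQ in h2.
have E : r * ((b + t * be) ^+ 2 * s - b ^+ 2 * (s + t ^+ 2 * r)) =
  2 * (t * b * r) * be * s + t ^+ 2 * be ^+ 2 * s * r - (t * b * r) ^+ 2 by ring.
rewrite ht in E.
have h3 : r * ((b + t * be) ^+ 2 * s - b ^+ 2 * (s + t ^+ 2 * r)) <= 0.
  by rewrite pmulr_rle0 // subr_le0.
have h4 : 0 <= t ^+ 2 * be ^+ 2 * s * r.
  by apply/mulr_ge0/ltW => //; apply/mulr_ge0/ltW => //; apply: mulr_ge0; exact: sqr_ge0.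
have h5 : (be * s) ^+ 2 <= 0.
  have -> : (be * s) ^+ 2 = 2 * (be * s) * be * s + t ^+ 2 * be ^+ 2 * s * r - (be * s) ^+ 2 - t ^+ 2 * be ^+ 2 * s * r by ring.
  rewrite -E; lra.
have : be * s = 0 by apply/eqP; rewrite -sqrf_eq0 eq_le h5 sqr_ge0.
by move/eqP; rewrite mulf_eq0 (gt_eqF sp) orbF => /eqP.
Qed.
Lemma perturb (R : realType) M (x y z : 'rV[R]_M) :
  x != 0 -> y != 0 -> dotr y z = 0 -> 0 < dotr x y ->
  (forall t, cosr x (y + t *: z) <= cosr x y) -> dotr x z = 0.
Proof.
move=> xn0 yn0 yz bpos Hle.
have [->|zn0] := eqVneq z 0; first by rewrite dotr0r.
have sp := dotr_gt0 yn0; have rp := dotr_gt0 zn0.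
have [t ht] : exists t, t * dotr x y * dotr z z = dotr x z * dotr y y.
  exists (dotr x z * dotr y y / (dotr x y * dotr z z)).
  by field; rewrite !gt_eqF.
have := Hle t.
have nS : dotr (y + t *: z) (y + t *: z) = dotr y y + t ^+ 2 * dotr z z.
  rewrite !dotrDl !dotrDr !dotrZl !dotrZr (dotrC z y) yz; ring.
rewrite /cosr dotrDr dotrZr {2}/norm2 nS.
have nxp := norm2_gt0 xn0.
have qp : 0 < norm2 y := norm2_gt0 yn0.
have Qp : 0 < Num.sqrt (dotr y y + t ^+ 2 * dotr z z).
  rewrite sqrtr_gt0 -nS; apply: dotr_gt0; apply/negP => /eqP e.
  have := congr1 (dotr y) e; rewrite dotrDr dotrZr yz mulr0 addr0 dotr0r.
  by move/eqP; rewrite (gt_eqF sp).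
rewrite ler_pdivrMr ?mulr_gt0 // mulrAC ler_pdivlMr ?mulr_gt0 // => hle.
apply: (real_key bpos sp rp nxp qp Qp _ _ ht hle).
  by rewrite /norm2 sqr_sqrtr // ltW.
by rewrite sqr_sqrtr // -nS; exact: dotr_ge0.
Qed.
Lemma addZ_neq0 (R : realType) M (y z : 'rV[R]_M) t :
  y != 0 -> dotr y z = 0 -> y + t *: z != 0.
Proof.
move=> yn0 yz; apply/negP => /eqP e.
have := congr1 (dotr y) e; rewrite dotrDr dotrZr yz mulr0 addr0 dotr0r.
by move/eqP; rewrite (gt_eqF (dotr_gt0 yn0)).
Qed.

Lemma angle_zero (R : realType) M (W Wh : 'M[R]_M) u vv c (v : 'rV[R]_M) :
  principal_data W Wh u vv c -> (v <= W)%MS -> v != 0 ->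
  (forall w, (w <= Wh)%MS -> dotr v w = 0) -> sinTheta_norm W c = 1.
Proof.
move=> PD vW vn0 vperp.
rewrite /sinTheta_norm.
case dE: (\rank W) => [|d'] /=.
  exfalso; move/eqP: dE; rewrite mxrank_eq0 => /eqP W0.
  by move: vW; rewrite W0 submx0 (negPf vn0).
move: PD; rewrite /principal_data dE => PD.
have uW i : (i < d'.+1)%N -> (u i <= W)%MS by move=> hi; case: (PD i hi) => [[]].
have vWh i : (i < d'.+1)%N -> (vv i <= Wh)%MS by move=> hi; case: (PD i hi) => [[]].
have un0 i : (i < d'.+1)%N -> u i != 0 by move=> hi; case: (PD i hi) => _ [].
have vn0' i : (i < d'.+1)%N -> vv i != 0 by move=> hi; case: (PD i hi) => _ [].
have uo i j : (i < d'.+1)%N -> (j < i)%N -> dotr (u i) (u j) = 0.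
  by move=> hi ji; case: (PD i hi) => _ _ /(_ j ji) [].
have vo i j : (i < d'.+1)%N -> (j < i)%N -> dotr (vv i) (vv j) = 0.
  by move=> hi ji; case: (PD i hi) => _ _ /(_ j ji) [].
have cE i : (i < d'.+1)%N -> c i = cosr (u i) (vv i).
  by move=> hi; case: (PD i hi).
have cmax i : (i < d'.+1)%N -> forall x y, (x <= W)%MS -> (y <= Wh)%MS -> x != 0 -> y != 0 ->
           (forall j, (j < i)%N -> dotr x (u j) = 0 /\ dotr y (vv j) = 0) ->
           cosr x y <= c i.
  by move=> hi; case: (PD i hi).
have hd : (d' < d'.+1)%N by [].
suff c0 : c d' = 0 by rewrite c0 acos0 sin_pihalf.
have cge0 : 0 <= c d'.
  have := cmax d' hd (u d') (- vv d') (uW _ hd).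
  rewrite eqmx_opp vWh // un0 // oppr_eq0 vn0' // cosrNr -cE //.
  move=> /(_ isT isT isT) H.
  have : - c d' <= c d' by apply: H => j jd; rewrite uo // dotrNl vo // oppr0.
  lra.
apply/eqP; rewrite eq_le cge0 andbT leNgt; apply/negP => cpos.
have cpos' i : (i < d'.+1)%N -> 0 < c i.
  move=> hi; apply: (lt_le_trans cpos); rewrite (cE d') //.
  apply: cmax => //; [exact: uW | exact: vWh | exact: un0 | exact: vn0' |].
  move=> j ji; have jd : (j < d')%N by apply: leq_trans ji _; rewrite -ltnS.
  by rewrite uo ?vo.
have bpos i : (i < d'.+1)%N -> 0 < dotr (u i) (vv i).
  move=> hi; have := cpos' i hi; rewrite cE // /cosr.
  have Np : 0 < (norm2 (u i) * norm2 (vv i))^-1.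
    by rewrite invr_gt0 mulr_gt0 // norm2_gt0 ?un0 ?vn0'.
  by rewrite (pmulr_lgt0 _ Np).
have bo1 i j : (i < j)%N -> (j < d'.+1)%N -> dotr (u i) (vv j) = 0.
  move=> ij jd; have id : (i < d'.+1)%N by apply: ltn_trans jd.
  have vij : dotr (vv i) (vv j) = 0 by rewrite dotrC vo.
  apply: (perturb (un0 i id) (vn0' i id) vij (bpos i id)) => t.
  rewrite -cE //; apply: cmax => //; first exact: uW.
  - by rewrite addmx_sub ?scalemx_sub ?vWh.
  - exact: un0.
  - exact: addZ_neq0 (vn0' i id) vij.
  move=> k ki; rewrite uo //; split => //.
  by rewrite dotrDl dotrZl !vo ?mulr0 ?addr0 // (ltn_trans ki ij).
have bo2 i j : (j < i)%N -> (i < d'.+1)%N -> dotr (u i) (vv j) = 0.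
  move=> ji id; have jd : (j < d'.+1)%N by apply: ltn_trans id.
  have uij : dotr (u j) (u i) = 0 by rewrite dotrC uo.
  rewrite dotrC; apply: (perturb (vn0' j jd) (un0 j jd) uij _) => [|t].
    by rewrite dotrC bpos.
  rewrite cosrC [cosr (vv j) (u j)]cosrC -cE //; apply: cmax => //; last first.
  - move=> k kj; rewrite vo //; split => //.
    by rewrite dotrDl dotrZl !uo ?mulr0 ?addr0 // (ltn_trans kj ji).
  - exact: vn0'.
  - exact: addZ_neq0 (un0 j jd) uij.
  - exact: vWh.
  - by rewrite addmx_sub ?scalemx_sub ?uW.
pose U := \matrix_(i < d'.+1) u i.
have UW : (U <= W)%MS by apply/row_subP => i; rewrite rowK; exact: uW.
have Ufree : row_free U.
  apply/inj_row_free => x xU0; apply/rowP => j.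
  have := congr1 (fun w => dotr w (u j)) xU0.
  rewrite /= mulmx_sum_row dotr_suml dotr0l (bigD1 j) //= big1 => [|k kj].
    rewrite rowK dotrZl addr0 => /eqP; rewrite mulf_eq0 (gt_eqF (dotr_gt0 (un0 _ (ltn_ord j)))) orbF.
    by rewrite mxE => /eqP.
  rewrite rowK dotrZl; case: (ltngtP k j) kj => [kj|jk|/val_inj->] //; last by rewrite eqxx.
    by rewrite dotrC uo ?mulr0.
  by rewrite uo ?mulr0.
have : (U == W)%MS.
  by rewrite -(geq_leqif (mxrank_leqif_eq UW)) dE (eqP Ufree).
move=> /andP [_ WU].
have [al vE] := submxP (submx_trans vW WU).
suff al0 : al = 0 by move: vn0; rewrite vE al0 mul0mx eqxx.
apply/rowP => j.
have := vperp (vv j) (vWh j (ltn_ord j)).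
rewrite vE mulmx_sum_row dotr_suml (bigD1 j) //= big1 => [|k kj].
  rewrite rowK dotrZl addr0 => /eqP; rewrite mulf_eq0 (gt_eqF (bpos _ (ltn_ord j))) orbF.
  by rewrite mxE => /eqP.
rewrite rowK dotrZl; case: (ltngtP k j) kj => [kj|jk|/val_inj->] //; last by rewrite eqxx.
  by rewrite bo1 ?mulr0.
by rewrite bo2 ?mulr0.
Qed.
Unset Implicit Arguments.
Lemma Hess_sym (R : realType) (n N : nat) (A B : 'M[R]_n)
  (q1 q2 eps alpha : R) (U : 'rV[R]_(Mdim n N)) :
  (HessE A B q1 q2 eps alpha U)^T = HessE A B q1 q2 eps alpha U.
Proof.
rewrite /HessE linearD /= tr_diag_mx; congr (_ + _).
apply/matrixP => s t; rewrite !mxE; congr (_ * _); apply: eq_bigr => m _.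
congr (_ * _); rewrite -cosN; congr cos.
rewrite /dotc -sumrN; apply: eq_bigr => i _; rewrite !mxE -mulrN opprB.
by [].
Qed.

Theorem lemma4p1 (R : realType) (n N : nat) (A B : 'M[R]_n)
  (q1 q2 eps alpha : R) (Ustar U Ubar : 'rV[R]_(Mdim n N)) :
  (0 < n)%N -> (0 < N)%N ->
  A \in unitmx -> A *m B^T = (2 * pi) %:M ->
  (* U^* is a generalized local minimum *)
  gradE A B q1 q2 eps alpha Ustar = 0 ->
  no_neg_eig (HessE A B q1 q2 eps alpha Ustar) ->
  (* U and Ubar lie in its generalized quadratic region *)
  no_neg_eig (HessE A B q1 q2 eps alpha U) ->
  no_neg_eig (HessE A B q1 q2 eps alpha Ubar) ->
  (\rank (Wk (HessE A B q1 q2 eps alpha U))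
     <= \rank (Wk (HessE A B q1 q2 eps alpha Ubar)))%N ->
  (exists u v c,
     principal_data (Wk (HessE A B q1 q2 eps alpha U))
                    (Wk (HessE A B q1 q2 eps alpha Ubar)) u v c /\
     sinTheta_norm (Wk (HessE A B q1 q2 eps alpha U)) c < 1) ->
  forall v : 'rV[R]_(Mdim n N),
    (* v solves the constrained minimization problem *)
    (ip v v = 1 /\
     (forall w, (w <= Wk (HessE A B q1 q2 eps alpha Ubar))%MS -> ip v w = 0) /\
     (forall x, ip x x = 1 ->
        (forall w, (w <= Wk (HessE A B q1 q2 eps alpha Ubar))%MS -> ip x w = 0) ->
        ip v (v *m HessE A B q1 q2 eps alpha U)
          <= ip x (x *m HessE A B q1 q2 eps alpha U))) ->
    (* its orthogonal projection onto W^s(U) is nonzero *)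
    exists p, is_proj_Ws (HessE A B q1 q2 eps alpha U) v p /\ p != 0.
Proof.
move=> _ Npos _ _ _ _ HnU _ _ [u [vv [c [PD Hsin]]]] v [vv1 [vperp _]].
have Hs := @Hess_sym R n N A B q1 q2 eps alpha U.
set H := HessE A B q1 q2 eps alpha U in Hs HnU PD Hsin vperp *.
have Mpos : 0 < (Mdim n N)%:R :> R by rewrite ltr0n /Mdim expn_gt0 Npos.
have ipE (f g : 'rV[R]_(Mdim n N)) : ip f g = (Mdim n N)%:R^-1 * dotr f g by [].
have [p [pWs pker]] := decomp Hs HnU v.
exists p; split.
  split => // w [k [a [e [He ->]]]].
  rewrite dotrC dotr_suml big1 // => i _.
  case: (He i) => ai eH.
  have : a i * dotr (e i) (v - p) = 0.
    rewrite -dotrZl -eH dotrC !dotr_mx trmx_mul mulmxA.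
    by rewrite Hs pker mul0mx mxE.
  by move/eqP; rewrite mulf_eq0 (gt_eqF ai) /= => /eqP.
apply/negP => /eqP p0.
rewrite p0 subr0 in pker.
have vW : (v <= Wk H)%MS by apply/eigenspaceP; rewrite pker scale0r.
have vn0 : v != 0.
  by apply/negP => /eqP v0; move: vv1; rewrite ipE v0 dotr0l mulr0 => /eqP; rewrite eq_sym oner_eq0.
have perp w : (w <= Wk (HessE A B q1 q2 eps alpha Ubar))%MS -> dotr v w = 0.
  move=> /vperp; rewrite ipE => /eqP; rewrite mulf_eq0 invr_eq0 (gt_eqF Mpos) /=.
  by move/eqP.
have := angle_zero PD vW vn0 perp.
lra.
Qed.
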